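(* Every direct summand of a centrally endo-AIP module is a centrally endo-AIP module.
   Context: Modules are unitary right $R$-modules. For a module $M$ with $S=\mathrm{End}_R(M)$ and $N\le M$, $l_S(N)=\{\phi\in S:\phi(N)=0\}$. An ideal $I$ of $S$ is centrally s-unital if for every $a\in I$ there is $z\in I$ central in $S$ with $az=a$. $M$ is centrally endo-AIP if $l_S(N)$ is a centrally s-unital ideal of $S$ for every fully invariant submodule $N$ of $M$. *)

(* Defs.v *)
From HB Require Import structures.
From mathcomp Require Import all_boot all_algebra.
Set Implicit Arguments. Unset Strict Implicit. Unset Printing Implicit Defensive.
Import GRing.Theory.
Local Open Scope ring_scope.

(* Right R-modules are modelled as left modules over the converse ring R^c:
   for M : lmodType R^c, [r *: m] stands for m r. *)

(* Elements of S = End_R(M): R-linear self-maps of M.  The product in S is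
   composition: (phi psi)(x) = phi (psi x). *)
Definition endo (R : nzRingType) (M : lmodType R^c) (f : M -> M) : Prop :=
  linear f.

Definition submodule (R : nzRingType) (M : lmodType R^c) (N : M -> Prop) : Prop :=
  [/\ N 0,
      (forall x y, N x -> N y -> N (x + y)) &
      (forall (a : R^c) x, N x -> N (a *: x))].

Definition fully_invariant (R : nzRingType) (M : lmodType R^c) (N : M -> Prop) : Prop :=
  submodule N /\ (forall f : M -> M, endo f -> forall x, N x -> N (f x)).

Definition lS (R : nzRingType) (M : lmodType R^c) (N : M -> Prop) (f : M -> M) : Prop :=
  endo f /\ (forall x, N x -> f x = 0).

Definition central_endo (R : nzRingType) (M : lmodType R^c) (z : M -> M) : Prop :=
  endo z /\ (forall g : M -> M, endo g -> forall x, z (g x) = g (z x)).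

Definition endo_ideal (R : nzRingType) (M : lmodType R^c) (I : (M -> M) -> Prop) : Prop :=
  [/\ (forall f, I f -> endo f),
      I (fun _ => 0),
      (forall f g, I f -> I g -> I (fun x => f x - g x)),
      (forall f g, I f -> endo g -> I (fun x => g (f x))) &
      (forall f g, I f -> endo g -> I (fun x => f (g x)))].

Definition centrally_s_unital (R : nzRingType) (M : lmodType R^c)
    (I : (M -> M) -> Prop) : Prop :=
  forall a, I a -> exists z, [/\ I z, central_endo z & forall x, a (z x) = a x].

Definition centrally_endo_AIP (R : nzRingType) (M : lmodType R^c) : Prop :=
  forall N : M -> Prop, fully_invariant N ->
    endo_ideal (lS N) /\ centrally_s_unital (lS N).

(* Main.v *)
Require Import Defs.
From HB Require Import structures.
From mathcomp Require Import all_boot all_algebra.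
From Stdlib Require Import IndefiniteDescription.
Import GRing.Theory.
Local Open Scope ring_scope.

Section Lin.
Variable R : nzRingType.
Implicit Types U V W : lmodType R^c.

Lemma lin0 U V (f : U -> V) : linear f -> f 0 = 0.
Proof. by move=> hf; rewrite -[0 in LHS](subrr 0) (zmod_morphism_linear hf) subrr. Qed.

Lemma linB U V (f : U -> V) : linear f -> forall x y, f (x - y) = f x - f y.
Proof. by move=> hf; apply: (zmod_morphism_linear hf). Qed.

Lemma linD U V (f : U -> V) : linear f -> forall x y, f (x + y) = f x + f y.
Proof. by move=> hf x y; rewrite -[x in LHS]scale1r hf scale1r. Qed.

Lemma linZ U V (f : U -> V) : linear f -> forall a x, f (a *: x) = a *: f x.
Proof. by move=> hf a x; rewrite -[a *: x]addr0 hf lin0 // addr0. Qed.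

Lemma lin_comp U V W (f : U -> V) (g : V -> W) :
  linear f -> linear g -> linear (fun x => g (f x)).
Proof. by move=> hf hg a u v; rewrite /= hf hg. Qed.

Lemma lin_sub U V (f g : U -> V) :
  linear f -> linear g -> linear (fun x => f x - g x).
Proof. by move=> hf hg a u v; rewrite /= hf hg scalerBr opprD addrACA. Qed.

Lemma lin_zero U V : linear (fun _ : U => (0 : V)).
Proof. by move=> a u v; rewrite scaler0 addr0. Qed.

Lemma lin_id U : linear (fun x : U => x).
Proof. by []. Qed.
End Lin.

Theorem proposition2p6 (R : nzRingType) (M N : lmodType R^c)
    (i : N -> M) (K : M -> Prop) :
  linear i -> injective i -> submodule K ->
  (forall n, K (i n) -> i n = 0) ->
  (forall m : M, exists n k, K k /\ m = i n + k) ->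
  centrally_endo_AIP M -> centrally_endo_AIP N.
Proof.
move=> hi hinj [K0 KD KZ] hKi hdec hM L hL.
have uniq : forall n n' k k', K k -> K k' -> i n + k = i n' + k' -> n = n'.
  move=> n n' k k' Kk Kk' E.
  have E2 : i (n - n') = k' + (-1) *: k.
    rewrite linB // scaleN1r -[i n](addrK k) E.
    by rewrite addrAC [i n' + k']addrC addrK.
  have : i (n - n') = i 0 by rewrite lin0 // hKi // E2; apply: KD => //; apply: KZ.
  by move/hinj/eqP; rewrite subr_eq0 => /eqP.
pose p (m : M) : N := proj1_sig (constructive_indefinite_description _ (hdec m)).
have pspec : forall m, exists k, K k /\ m = i (p m) + k.
  by move=> m; rewrite /p; case: constructive_indefinite_description.
have pE : forall m n k, K k -> m = i n + k -> p m = n.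
  move=> m n k Kk E; have [k' [Kk' E']] := pspec m.
  by apply: (uniq _ _ k' k) => //; rewrite -E' -E.
have pi : forall n, p (i n) = n.
  by move=> n; apply: (pE _ _ 0) => //; rewrite addr0.
have hp : linear p.
  move=> a u v; have [ku [Ku Eu]] := pspec u; have [kv [Kv Ev]] := pspec v.
  apply: (pE _ _ (a *: ku + kv)); first by apply: KD => //; apply: KZ.
  by rewrite hi {1}Eu {1}Ev scalerDr addrACA.
have [[hLs0 hLsD hLsZ] hLf] := hL.
split.
  split.
  - by move=> f [].
  - by split; [apply: lin_zero | ].
  - move=> f g [hf f0] [hg g0]; split; first exact: lin_sub.
    by move=> x Lx; rewrite f0 // g0 // subrr.
  - move=> f g [hf f0] hg; split; first exact: lin_comp.
    by move=> x Lx; rewrite f0 // lin0.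
  - move=> f g [hf f0] hg; split; first exact: lin_comp.
    by move=> x Lx; rewrite f0 //; apply: hLf.
move=> a [ha a0].
pose Y (m : M) := forall phi : M -> M, endo phi -> L (p (phi m)).
have hY : fully_invariant Y.
  split; first split.
  - by move=> phi hphi; rewrite !lin0.
  - by move=> x y hx hy phi hphi; rewrite !linD //; apply: hLsD; [apply: hx|apply: hy].
  - by move=> c x hx phi hphi; rewrite !linZ //; apply: hLsZ; apply: hx.
  - move=> f hf x hx phi hphi; apply: (hx (fun m => phi (f m))); exact: lin_comp.
have [_ hsu] := hM Y hY.
pose A (m : M) := i (a (p m)).
have hA : lS Y A.
  split; first by apply: lin_comp => //; apply: lin_comp.
  by move=> y hy; rewrite /A a0 ?lin0 //; apply: (hy (fun m => m)); exact: lin_id.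
have [Z [hZY hZc hAZ]] := hsu A hA.
have [hZ hZcom] := hZc.
have hz : linear (fun x => p (Z (i x))).
  by apply: lin_comp => //; apply: lin_comp => //; case: hZY.
exists (fun x => p (Z (i x))); split.
- split => // x Lx.
  have Yx : Y (i x).
    move=> phi hphi.
    have hc : endo (fun n => p (phi (i n))).
      by apply: lin_comp => //; apply: lin_comp.
    exact: (hLf _ hc x Lx).
  have [_ hZ0] := hZY.
  by rewrite (hZ0 _ Yx) lin0.
- split => // g hg x.
  pose G (m : M) := i (g (p m)).
  have hG : endo G by apply: lin_comp => //; apply: lin_comp.
  have -> : i (g x) = G (i x) by rewrite /G pi.
  by rewrite (hZcom G hG) /G pi.
- move=> x; have := hAZ (i x); rewrite /A pi; exact: hinj.
Qed.
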